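(* Let $(A,\mu)$ be an associative algebra over a field $k$, $\alpha:A\to A$ an algebra endomorphism, and $T:A\otimes A\to A\otimes A$, $\tilde T_1,\tilde T_2:A\otimes A\otimes A\to A\otimes A\otimes A$ linear maps satisfying $(\alpha\otimes\alpha)\circ T=T\circ(\alpha\otimes\alpha)$, $T\circ(\mathrm{id}_A\otimes\mu)=(\mathrm{id}_A\otimes\mu)\circ\tilde T_1\circ(T\otimes\mathrm{id}_A)$, $T\circ(\mu\otimes\mathrm{id}_A)=(\mu\otimes\mathrm{id}_A)\circ\tilde T_2\circ(\mathrm{id}_A\otimes T)$, $\tilde T_1\circ(T\otimes\mathrm{id}_A)\circ(\alpha\otimes T)=\tilde T_2\circ(\mathrm{id}_A\otimes T)\circ(T\otimes\alpha)$. Then $(A,\mu\circ T,\alpha)$ is a Hom-associative algebra.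
   Context: Algebras are not assumed unital. A Hom-associative algebra is a triple $(A,\mu,\alpha)$ with $\mu(a\otimes a')=aa'$ and $\alpha$ linear such that $\alpha(aa')=\alpha(a)\alpha(a')$ and $\alpha(a)(a'a'')=(aa')\alpha(a'')$ for all $a,a',a''\in A$. *)

(* Defs.v *)
From HB Require Import structures.
From mathcomp Require Import all_boot all_algebra.
Set Implicit Arguments. Unset Strict Implicit. Unset Printing Implicit Defensive.
Import GRing.Theory.
Local Open Scope ring_scope.

Definition lin (K : fieldType) (U V : lmodType K) (f : U -> V) : Prop :=
  forall (a : K) (u v : U), f (a *: u + v) = a *: f u + f v.

Definition bilin (K : fieldType) (U W V : lmodType K) (f : U -> W -> V) : Prop :=
  (forall w, lin (fun u => f u w)) /\ (forall u, lin (f u)).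

Definition is_tensor (K : fieldType) (U W V : lmodType K) (t : U -> W -> V) : Prop :=
  bilin t /\
  forall (X : lmodType K) (f : U -> W -> X), bilin f ->
    exists g : V -> X, [/\ lin g, (forall u w, g (t u w) = f u w) &
      forall g' : V -> X, lin g' -> (forall u w, g' (t u w) = f u w) ->
        forall v, g' v = g v].

Definition assoc_alg (K : fieldType) (A : lmodType K) (mul : A -> A -> A) : Prop :=
  bilin mul /\ forall a b c, mul a (mul b c) = mul (mul a b) c.

Definition hom_assoc_alg (K : fieldType) (A : lmodType K)
    (mul : A -> A -> A) (alpha : A -> A) : Prop :=
  [/\ bilin mul, lin alpha,
      (forall a b, alpha (mul a b) = mul (alpha a) (alpha b)) &
      forall a b c, mul (alpha a) (mul b c) = mul (mul a b) (alpha c)].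

(* Main.v *)
Require Import Defs.
From mathcomp Require Import all_boot all_algebra.
Import GRing.Theory.
Local Open Scope ring_scope.

(* A2 = A ⊗ A (embedding t2), A3 = A2 ⊗ A (embedding t3l : (a⊗b, c) ↦ a⊗b⊗c),
   t3r : (a, x) ↦ a ⊗ x the canonical identification A ⊗ (A ⊗ A) ≅ A3.
   Tensor-product maps are given by their (uniquely determining) actions. *)
Lemma lin_comp (K : fieldType) (U V W : lmodType K) (f : V -> W) (g : U -> V) :
  lin f -> lin g -> lin (fun x => f (g x)).
Proof. by move=> hf hg a u v; rewrite hg hf. Qed.

Lemma tensor_uniq (K : fieldType) (U W V X : lmodType K) (t : U -> W -> V)
  (g1 g2 : V -> X) : is_tensor t -> lin g1 -> lin g2 ->
  (forall u w, g1 (t u w) = g2 (t u w)) -> forall v, g1 v = g2 v.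
Proof.
move=> [[t1 t2] univ] l1 l2 e v.
have bf : bilin (fun u w => g1 (t u w)).
  by split=> [w|u]; apply: lin_comp.
have [g [_ _ hu]] := univ _ _ bf.
by rewrite (hu g1 l1 (fun _ _ => erefl)) (hu g2 l2 (fun u w => esym (e u w))).
Qed.

Theorem theorem4p1 (K : fieldType) (A A2 A3 : lmodType K)
  (mul : A -> A -> A) (alpha : A -> A)
  (t2 : A -> A -> A2) (t3l : A2 -> A -> A3) (t3r : A -> A2 -> A3)
  (mu : A2 -> A) (T : A2 -> A2) (T1 T2 : A3 -> A3)
  (aa : A2 -> A2) (Tid idT : A3 -> A3) (idmu mu_id : A3 -> A2)
  (alT Tal : A3 -> A3) :
  assoc_alg mul ->
  lin alpha -> (forall a b, alpha (mul a b) = mul (alpha a) (alpha b)) ->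
  is_tensor t2 -> is_tensor t3l ->
  bilin t3r -> (forall a b c, t3r a (t2 b c) = t3l (t2 a b) c) ->
  lin mu -> (forall a b, mu (t2 a b) = mul a b) ->
  lin T -> lin T1 -> lin T2 ->
  lin aa -> (forall a b, aa (t2 a b) = t2 (alpha a) (alpha b)) ->
  lin Tid -> (forall x c, Tid (t3l x c) = t3l (T x) c) ->
  lin idT -> (forall a x, idT (t3r a x) = t3r a (T x)) ->
  lin idmu -> (forall a x, idmu (t3r a x) = t2 a (mu x)) ->
  lin mu_id -> (forall x c, mu_id (t3l x c) = t2 (mu x) c) ->
  lin alT -> (forall a x, alT (t3r a x) = t3r (alpha a) (T x)) ->
  lin Tal -> (forall x c, Tal (t3l x c) = t3l (T x) (alpha c)) ->
  (forall x, aa (T x) = T (aa x)) ->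
  (forall z, T (idmu z) = idmu (T1 (Tid z))) ->
  (forall z, T (mu_id z) = mu_id (T2 (idT z))) ->
  (forall z, T1 (Tid (alT z)) = T2 (idT (Tal z))) ->
  hom_assoc_alg (fun a b => mu (T (t2 a b))) alpha.
Proof.
move=> [[m1 m2] massoc] lal almul tt2 tt3 bt3r t3rE lmu muE lT lT1 lT2 laa aaE
  lTid TidE lidT idTE lidmu idmuE lmu_id mu_idE lalT alTE lTal TalE
  aaT H1 H2 H3.
have bt2 := tt2.1.
have amu : forall x, alpha (mu x) = mu (aa x).
  apply: (@tensor_uniq _ _ _ _ _ _ (fun x => alpha (mu x)) (fun x => mu (aa x)) tt2); [exact: lin_comp|exact: lin_comp|].
  by move=> u w; rewrite aaE !muE almul.
have asc : forall z, mu (idmu z) = mu (mu_id z).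
  apply: (@tensor_uniq _ _ _ _ _ _ (fun z => mu (idmu z)) (fun z => mu (mu_id z)) tt3); [exact: lin_comp|exact: lin_comp|].
  move=> x c; move: x.
  apply: (@tensor_uniq _ _ _ _ _ _ (fun x => mu (idmu (t3l x c))) (fun x => mu (mu_id (t3l x c))) tt2).
  - apply: lin_comp => //; apply: lin_comp => //; exact: (tt3.1.1 c).
  - apply: lin_comp => //; apply: lin_comp => //; exact: (tt3.1.1 c).
  move=> a b; rewrite -t3rE idmuE t3rE mu_idE !muE massoc //.
split.
- split=> [w|u]; apply: lin_comp => //; apply: lin_comp => //.
  + exact: (bt2.1 w).
  + exact: (bt2.2 u).
- exact: lal.
- by move=> a b; rewrite amu aaT aaE.
- move=> a b c.
  rewrite -idmuE -alTE t3rE H1 H3 asc.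
  by rewrite -mu_idE -TalE H2.
Qed.
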